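(* Let $X\sim P_X$, teacher partition $(\Omega_k^\star)$ with experts $f_k^\star$, $\mu=\sum_k\mathbf{1}_{\Omega_k^\star}f_k^\star$, $|\mu(X)|\le B$ a.s., $Y=\mu(X)+\xi$ with $\mathbb{E}[\xi\mid X]=0$, $\mathbb{E}\xi^2<\infty$. Let student experts satisfy $\sup_{k,x}|f_k(x;\theta_k)|\le B_{\mathrm{stu}}$ for all parameters considered. Assume there are $\gamma_{\mathrm{gap}}>0$, $\eta_{\mathrm{gap}}\in[0,1)$ such that for every $\theta$ considered there is a permutation $\pi$ with $P_X(\{x\in\Omega_k^\star:(f_j(x;\theta_j)-f_k^\star(x))^2\le\gamma_{\mathrm{gap}}\})\le\eta_{\mathrm{gap}}$ for all $k$ and $j\ne\pi(k)$ (such $\pi$ is an admissible matching for $\theta$). Fix $\varepsilon\in(0,1/2)$ with $2\varepsilon B_{\mathrm{stu}}\le\frac12\sqrt{\gamma_{\mathrm{gap}}}$. Then for all $(\theta,\phi)$, all $\tau>0$ and every admissible matching $\pi$ for $\theta$, \[\mathbb{E}\big[(\mu(X)-h_{\theta,\phi,\tau}(X))^2\mathbf{1}_{\{X\in\mathcal{G}_\varepsilon(\tau;\phi)\}}\big]\ge\frac{\gamma_{\mathrm{gap}}}{4}\max\{P_X(\mathcal{E}_{\mathrm{mis}}(\pi;\theta,\phi,\tau))-K(K-1)\eta_{\mathrm{gap}},0\}.\] Consequently, if $\widetilde L_\tau(\theta,\phi)\le R$ then $P_X(\mathcal{E}_{\mathrm{mis}}(\pi;\theta,\phi,\tau))\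le\frac{4R}{\gamma_{\mathrm{gap}}}+K(K-1)\eta_{\mathrm{gap}}$.
   Context: $p_k^{(\tau)}(x;\phi)=e^{a_k(x;\phi)/\tau}/\sum_je^{a_j(x;\phi)/\tau}$; $h_{\theta,\phi,\tau}=\sum_kp_k^{(\tau)}f_k(\cdot;\theta_k)$; $\widetilde L_\tau(\theta,\phi)=\mathbb{E}[(\mu(X)-h_{\theta,\phi,\tau}(X))^2]$; $\mathcal{G}_\varepsilon(\tau;\phi)=\{x:\max_kp_k^{(\tau)}(x;\phi)>1-\varepsilon\}$; $\mathcal{E}_{\mathrm{mis}}(\pi;\theta,\phi,\tau)=\{x\in\mathcal{X}:x\in\Omega_k^\star\text{ and }p_j^{(\tau)}(x;\phi)\ge1-\varepsilon\text{ for some }k\text{ and some }j\ne\pi(k)\}\cap\mathcal{G}_\varepsilon(\tau;\phi)$. *)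

(* Defs.v *)
From HB Require Import structures.
From mathcomp Require Import all_boot all_order all_algebra all_fingroup.
From mathcomp Require Import all_classical all_reals all_analysis.
Set Implicit Arguments. Unset Strict Implicit. Unset Printing Implicit Defensive.
Import Order.TTheory GRing.Theory Num.Theory.
Local Open Scope classical_set_scope.
Local Open Scope ring_scope.

Section MoE.
Context {R : realType} {T : Type} {K : nat} {Theta Phi : Type}.

Definition teacher_mu (Omega : 'I_K -> set T) (fstar : 'I_K -> T -> R) (x : T) : R :=
  \sum_(k < K) \1_(Omega k) x * fstar k x.

Definition gate_p (a : 'I_K -> Phi -> T -> R) (phi : Phi) (tau : R)
  (k : 'I_K) (x : T) : R :=
  expR (a k phi x / tau) / \sum_(j < K) expR (a j phi x / tau).

Definition student_h (f : 'I_K -> Theta -> T -> R) (a : 'I_K -> Phi -> T -> R)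
  (theta : Theta) (phi : Phi) (tau : R) (x : T) : R :=
  \sum_(k < K) gate_p a phi tau k x * f k theta x.

Definition conf_region (a : 'I_K -> Phi -> T -> R) (phi : Phi) (tau eps : R) : set T :=
  [set x | 1 - eps < \big[Num.max/0]_(k < K) gate_p a phi tau k x].

Definition mis_event (Omega : 'I_K -> set T) (a : 'I_K -> Phi -> T -> R)
  (pi : {perm 'I_K}) (phi : Phi) (tau eps : R) : set T :=
  [set x | exists k j, Omega k x /\ j != pi k /\ 1 - eps <= gate_p a phi tau j x]
  `&` conf_region a phi tau eps.

End MoE.

Definition admissible {d} {T : measurableType d} {R : realType} {K : nat} {Theta : Type}
  (P : probability T R) (Omega : 'I_K -> set T) (fstar : 'I_K -> T -> R)
  (f : 'I_K -> Theta -> T -> R) (gamma eta : R) (theta : Theta) (pi : {perm 'I_K}) : Prop :=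
  forall k j : 'I_K, j != pi k ->
    (P (Omega k `&` [set x | ((f j theta x - fstar k x) ^+ 2 <= gamma)%R]) <= eta%:E)%E.

(* Main.v *)
Require Import Defs.
From HB Require Import structures.
From mathcomp Require Import all_boot all_order all_algebra all_fingroup.
From mathcomp Require Import all_classical all_reals all_analysis.
From mathcomp Require Import measurable_realfun.
From mathcomp.algebra_tactics Require Import ring lra.
Import Order.TTheory GRing.Theory Num.Theory.
Local Open Scope classical_set_scope.
Local Open Scope ring_scope.

Lemma mix_close (K : nat) (R : realType) (p fv : 'I_K -> R) (j : 'I_K) (Bs e : R) :
  (forall i, 0 <= p i) -> \sum_i p i = 1 -> 1 - e <= p j ->
  (forall i, `|fv i| <= Bs) ->
  `|\sum_i p i * fv i - fv j| <= e * (2 * Bs).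
Proof.
move=> p0 p1 pj fB.
have -> : \sum_i p i * fv i - fv j = \sum_i p i * (fv i - fv j).
  rewrite -[X in _ - X]mul1r -p1 mulr_suml -sumrB.
  by apply: eq_bigr => i _; rewrite mulrBr.
have Bs0 : 0 <= Bs by apply: le_trans (fB j).
apply: le_trans (ler_norm_sum _ _ _) _.
rewrite (bigD1 j) //= subrr mulr0 normr0 add0r.
apply: (@le_trans _ _ (\sum_(i < K | i != j) p i * (2 * Bs))).
  apply: ler_sum => i _; rewrite normrM ger0_norm //; apply: ler_wpM2l => //.
  apply: le_trans (ler_normB _ _) _.
  by have := fB i; have := fB j; lra.
rewrite -mulr_suml.
have hs : \sum_(i < K | i != j) p i = 1 - p j.
  by rewrite -p1 [in RHS](bigD1 j) //=; lra.
by rewrite hs; apply: ler_wpM2r; lra.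
Qed.

Lemma sep_sq (R : realType) (g w v : R) : 0 < g ->
  Num.sqrt g < `|w| -> `|v| <= Num.sqrt g / 2 -> g / 4 <= (w + v) ^+ 2.
Proof.
move=> g0 hw hv.
have h1 : `|w| - `|v| <= `|w + v|.
  by have := ler_normB (w + v) v; rewrite addrK; lra.
have s0 : 0 <= Num.sqrt g := sqrtr_ge0 g.
have sg : Num.sqrt g ^+ 2 = g by rewrite sqr_sqrtr // ltW.
rewrite -real_normK ?num_real //.
rewrite -sg.
have : Num.sqrt g / 2 <= `|w + v| by lra.
move: (Num.sqrt g) (`|w + v|) s0 => s u s0 su.
nra.
Qed.

Section gate.
Context {R : realType} {T : Type} {K : nat} {Phi : Type}.
Variables (a : 'I_K -> Phi -> T -> R) (ph : Phi) (tau : R).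

Lemma gate_den_gt0 (k : 'I_K) x : 0 < \sum_(j < K) expR (a j ph x / tau).
Proof.
rewrite (bigD1 k) //=.
have := @sumr_ge0 R _ (index_enum 'I_K) (fun j => j != k) (fun j => expR (a j ph x / tau)) (fun j _ => ltW (expR_gt0 _)).
have := expR_gt0 (a k ph x / tau); lra.
Qed.

Lemma gate_gt0 k x : 0 < gate_p a ph tau k x.
Proof. by rewrite /gate_p divr_gt0 // ?expR_gt0 // (gate_den_gt0 k). Qed.

Lemma gate_sum1 (k0 : 'I_K) x : \sum_k gate_p a ph tau k x = 1.
Proof.
rewrite /gate_p -mulr_suml mulfV //.
by rewrite gt_eqF // (gate_den_gt0 k0).
Qed.
End gate.
Lemma in_bigsetU (T : Type) (I : finType) (P : pred I) (F : I -> set T) x :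
  (\big[setU/set0]_(i | P i) F i) x <-> exists i, P i /\ F i x.
Proof.
rewrite -bigcup_seq_cond; split.
  by case=> i /= /andP[_ Pi] Fi; exists i.
by case=> i [Pi Fi]; exists i => //=; rewrite mem_index_enum.
Qed.

Section meas.
Context {d : measure_display} {T : measurableType d} {R : realType}.

Lemma mset_lt (f g : T -> R) : measurable_fun setT f -> measurable_fun setT g ->
  measurable [set x | f x < g x].
Proof.
move=> mf mg.
have := measurable_fun_ltr mf mg measurableT (Y := [set true]) ltac:(by []).
by rewrite setTI.
Qed.

Lemma mset_le (f g : T -> R) : measurable_fun setT f -> measurable_fun setT g ->
  measurable [set x | f x <= g x].
Proof.
move=> mf mg.
have := measurable_fun_ler mf mg measurableT (Y := [set true]) ltac:(by []).
by rewrite setTI.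
Qed.

Lemma union_bound (P : probability T R) (I : finType) (Q : pred I) (F : I -> set T) (c : R) :
  (forall i, Q i -> measurable (F i)) -> (forall i, Q i -> (P (F i) <= c%:E)%E) ->
  measurable (\big[setU/set0]_(i | Q i) F i) /\
  (P (\big[setU/set0]_(i | Q i) F i) <= \sum_(i | Q i) c%:E)%E.
Proof.
move=> mF hF.
apply: (big_ind2 (fun A s => measurable A /\ (P A <= s)%E)).
- by rewrite measure0.
- move=> A1 s1 A2 s2 [m1 h1] [m2 h2]; split; first exact: measurableU.
  apply: le_trans (measureU2 _ m1 m2) _; exact: leeD.
- by move=> i Qi; split; [exact: mF|exact: hF].
Qed.

Variables (K : nat) (Phi : Type) (a : 'I_K -> Phi -> T -> R) (ph : Phi) (tau : R).
Hypothesis ha : forall k, measurable_fun setT (a k ph).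

Lemma mexp j : measurable_fun setT (fun x => expR (a j ph x / tau)).
Proof.
apply: measurableT_comp => //.
exact: (measurable_funM (ha j) (measurable_cst _)).
Qed.

Lemma gate_meas k : measurable_fun setT (gate_p a ph tau k).
Proof.
have Sm : measurable_fun setT (fun x => \sum_(j < K) expR (a j ph x / tau)).
  by apply: measurable_sum => j; exact: mexp.
have -> : gate_p a ph tau k = fun x => expR (a k ph x / tau) * expR (- ln (\sum_(j < K) expR (a j ph x / tau))).
  apply: funext => x; rewrite /gate_p expRN lnK //.
  by rewrite posrE (gate_den_gt0 _ _ _ k).
apply: measurable_funM; first exact: mexp.
apply: measurableT_comp => //.
apply: measurable_funN.
exact: measurableT_comp.
Qed.

Lemma conf_meas eps : eps < 1 -> measurable (conf_region a ph tau eps).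
Proof.
move=> e1.
have : forall s : seq 'I_K, measurable_fun setT (fun x => \big[Num.max/0]_(k <- s) gate_p a ph tau k x).
  elim=> [|k s ih].
    under eq_fun do rewrite big_nil.
    exact: measurable_cst.
  under eq_fun do rewrite big_cons.
  exact: (measurable_maxr (gate_meas k) ih).
move=> /(_ (index_enum 'I_K)) mM.
rewrite /conf_region. exact: (mset_lt _ _ (measurable_cst (1 - eps)) mM).
Qed.

End meas.

Lemma mu_at (R : realType) (T : Type) (K : nat) (Omega : 'I_K -> set T)
  (fstar : 'I_K -> T -> R) (k : 'I_K) x :
  (forall k l, k != l -> Omega k `&` Omega l = set0) ->
  Omega k x -> teacher_mu Omega fstar x = fstar k x.
Proof.
move=> disj Ok; rewrite /teacher_mu (bigD1 k) //= big1 ?addr0.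
  by rewrite indicE mem_set // mul1r.
move=> i ik; rewrite indicE; case: (boolP (x \in Omega i)) => [/set_mem Oi|_].
  have : (Omega i `&` Omega k) x by split.
  by rewrite disj.
by rewrite mul0r.
Qed.

Lemma const_sum (R : realType) (K : nat) (p : 'I_K) (c : R) :
  \sum_(j < K | j != p) c = (K - 1)%:R * c.
Proof.
have h : \sum_(j < K) c = c + \sum_(j < K | j != p) c := bigD1 p isT.
have h2 : \sum_(j < K) c = K%:R * c by rewrite sumr_const card_ord mulr_natl.
have K1 : (1 <= K)%N := leq_trans (ltn0Sn p) (ltn_ord p).
by rewrite natrB // mulrBl mul1r -h2 h; ring.
Qed.

Theorem mainTheorem12 (d : measure_display) (T : measurableType d) (R : realType)
  (P : probability T R) (K : nat) (Theta Phi : Type)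
  (Omega : 'I_K -> set T) (fstar : 'I_K -> T -> R)
  (f : 'I_K -> Theta -> T -> R) (a : 'I_K -> Phi -> T -> R)
  (B Bstu gamma eta eps : R)
  (hOmega_meas : forall k, measurable (Omega k))
  (hOmega_disj : forall k l, k != l -> Omega k `&` Omega l = set0)
  (hOmega_cover : \bigcup_(k in [set: 'I_K]) Omega k = [set: T])
  (hfstar_meas : forall k, measurable_fun [set: T] (fstar k))
  (hf_meas : forall k th, measurable_fun [set: T] (f k th))
  (ha_meas : forall k ph, measurable_fun [set: T] (a k ph))
  (hmuB : {ae P, forall x, `|teacher_mu Omega fstar x| <= B})
  (hBstu : forall k th x, `|f k th x| <= Bstu)
  (hgamma : 0 < gamma) (heta0 : 0 <= eta) (heta1 : eta < 1)
  (hgap : forall th : Theta, exists pi : {perm 'I_K},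
      admissible P Omega fstar f gamma eta th pi)
  (heps0 : 0 < eps) (heps1 : eps < 1 / 2)
  (hepsB : 2 * eps * Bstu <= 1 / 2 * Num.sqrt gamma) :
  forall (th : Theta) (ph : Phi) (tau : R), 0 < tau ->
  forall pi : {perm 'I_K}, admissible P Omega fstar f gamma eta th pi ->
    ((\int[P]_(x in conf_region a ph tau eps)
        ((teacher_mu Omega fstar x - student_h f a th ph tau x) ^+ 2)%:E
      >= (gamma / 4)%:E *
         maxe (P (mis_event Omega a pi ph tau eps) - ((K * (K - 1))%:R * eta)%:E) 0)
    /\
    (forall Rb : R,
      \int[P]_x ((teacher_mu Omega fstar x - student_h f a th ph tau x) ^+ 2)%:E
        <= Rb%:E ->
      P (mis_event Omega a pi ph tau eps)
        <= (4 * Rb / gamma + (K * (K - 1))%:R * eta)%:E))%E.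
Proof.
move=> th ph tau tau0 pi adm.
have gm : forall k, measurable_fun setT (gate_p a ph tau k).
  by move=> k; exact: (@gate_meas _ _ _ _ _ a ph tau (fun k => ha_meas k ph) k).
pose G := conf_region a ph tau eps.
pose E := mis_event Omega a pi ph tau eps.
pose A := fun k j => Omega k `&` [set x | (f j th x - fstar k x) ^+ 2 <= gamma].
pose Bad := \big[setU/set0]_(k < K) \big[setU/set0]_(j < K | j != pi k) A k j.
pose S := E `&` ~` Bad.
pose F := fun x => ((teacher_mu Omega fstar x - student_h f a th ph tau x) ^+ 2)%:E.
have e1 : eps < 1 by lra.
have mG : measurable G := @conf_meas _ _ _ _ _ a ph tau (fun k => ha_meas k ph) eps e1.
have mA : forall k j, measurable (A k j).
  move=> k j; apply: measurableI => //.
  apply: (mset_le _ _ _ (measurable_cst gamma)).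
  by apply: measurable_funX; apply: measurable_funB.
have [mBad PBad] : measurable Bad /\
    (P Bad <= \sum_(k < K) ((((K - 1)%N%:R * eta)%R)%:E))%E.
  apply: union_bound => k _.
    by case: (union_bound P _ (fun j => j != pi k) (A k) eta (fun j _ => mA k j) (fun j jk => adm k j jk)).
  case: (union_bound P _ (fun j => j != pi k) (A k) eta (fun j _ => mA k j) (fun j jk => adm k j jk)) => _ h.
  by apply: le_trans h _; rewrite sumEFin const_sum.
have mE : measurable E.
  have -> : E = (\big[setU/set0]_(k < K) \big[setU/set0]_(j < K | j != pi k)
      (Omega k `&` [set x | 1 - eps <= gate_p a ph tau j x])) `&` G.
    apply/seteqP; split => x [h1 h2]; split => //.
      case: h1 => k [j [Ok [jk gj]]].
      by apply/in_bigsetU; exists k; split => //; apply/in_bigsetU; exists j.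
    case/in_bigsetU: h1 => k [_ /in_bigsetU [j [jk [Ok gj]]]].
    by exists k, j.
  apply: measurableI => //.
  apply: bigsetU_measurable => k _; apply: bigsetU_measurable => j _.
  apply: measurableI => //.
  exact: (mset_le _ _ (measurable_cst (1 - eps)) (gm j)).
have mS : measurable S by apply: measurableI => //; apply: measurableC.
have mF : measurable_fun setT F.
  apply/measurable_EFinP; apply: measurable_funX; apply: measurable_funB.
    rewrite /teacher_mu; apply: measurable_sum => k; apply: measurable_funM => //.
  by rewrite /student_h; apply: measurable_sum => k; apply: measurable_funM.
have F0 : forall x, (0 <= F x)%E by move=> x; rewrite lee_fin sqr_ge0.
have SG : S `<=` G by move=> x [[_ ?] _].
have ptw : forall x, S x -> gamma / 4 <= (teacher_mu Omega fstar x - student_h f a th ph tau x) ^+ 2.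
  move=> x [[[k [j [Ok [jk gj]]]] Gx] nB].
  have nle : ~ ((f j th x - fstar k x) ^+ 2 <= gamma).
    move=> hle; apply: nB; apply/in_bigsetU; exists k; split => //.
    by apply/in_bigsetU; exists j.
  have glt : gamma < (fstar k x - f j th x) ^+ 2.
    rewrite ltNge; apply/negP => hle; apply: nle.
    by have -> : (f j th x - fstar k x) ^+ 2 = (fstar k x - f j th x) ^+ 2 by ring.
  have hw : Num.sqrt gamma < `|fstar k x - f j th x|.
    by rewrite -sqrtr_sqr ltr_sqrt // (lt_trans hgamma glt).
  have hv : `|f j th x - student_h f a th ph tau x| <= Num.sqrt gamma / 2.
    rewrite distrC.
    have := @mix_close _ _ (fun i => gate_p a ph tau i x) (fun i => f i th x) j Bstu eps
      (fun i => ltW (gate_gt0 a ph tau i x)) (gate_sum1 a ph tau j x) gj (fun i => hBstu i th x).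
    rewrite /student_h => hm.
    have Bs0 : 0 <= Bstu := le_trans (normr_ge0 _) (hBstu j th x).
    nra.
  rewrite (@mu_at _ _ _ Omega fstar k x hOmega_disj Ok).
  have -> : fstar k x - student_h f a th ph tau x = (fstar k x - f j th x) + (f j th x - student_h f a th ph tau x) by ring.
  exact: sep_sq.
have hI : (((gamma / 4) * fine (P S))%:E <= \int[P]_(x in G) F x)%E.
  have mFG : measurable_fun G F := measurable_funS measurableT (@subsetT _ G) mF.
  have mFS : measurable_fun S F := measurable_funS measurableT (@subsetT _ S) mF.
  apply: le_trans (ge0_subset_integral P mS mG mFG (fun x _ => F0 x) SG).
  have := integral_cst P mS (gamma / 4)%:E.
  move=> hc; rewrite EFinM fineK; last exact: fin_num_measure.
  rewrite -hc.
  apply: ge0_le_integral => //.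
  - by move=> x _; rewrite lee_fin; lra.
have hSB : (P E <= P S + P Bad)%E.
  apply: le_trans (measureU2 P mS mBad).
  apply: le_measure; rewrite ?inE //; first exact: measurableU.
  move=> x Ex; case: (pselect (Bad x)) => hb; [right|left] => //; by split.
have PB' : (P Bad <= ((K * (K - 1))%:R * eta)%:E)%E.
  apply: le_trans PBad _; rewrite sumEFin sumr_const card_ord lee_fin.
  by rewrite natrM -mulr_natl le_eqVlt; apply/orP; left; apply/eqP; ring.
set pE := fine (P E). set pS := fine (P S). set pB := fine (P Bad).
have eE : P E = pE%:E by rewrite /pE fineK //; exact: fin_num_measure.
have eS : P S = pS%:E by rewrite /pS fineK //; exact: fin_num_measure.
have eB : P Bad = pB%:E by rewrite /pB fineK //; exact: fin_num_measure.
have pS0 : 0 <= pS by rewrite /pS; apply: fine_ge0; exact: measure_ge0.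
move: hSB PB'; rewrite eE eS eB -EFinD !lee_fin => hSB PB'.
split.
  rewrite -EFinB (_ : (0 : \bar R)%E = (0%R)%:E) // -EFin_max -EFinM.
  apply: le_trans hI; rewrite lee_fin; apply: ler_wpM2l; first lra.
  rewrite -/pS ge_max; apply/andP; split; lra.
move=> Rb hR.
have hGT : (\int[P]_(x in G) F x <= \int[P]_(x in setT) F x)%E :=
  ge0_subset_integral P mG measurableT mF (fun x _ => F0 x) (@subsetT _ G).
have := le_trans hI (le_trans hGT hR); rewrite lee_fin -/pS => hq.
rewrite lee_fin.
have : pS <= 4 * Rb / gamma by rewrite ler_pdivlMr //; nra.
lra.
Qed.
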